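(* Let $\kappa$ be an uncountable cardinal with $\kappa^{<\kappa}=\kappa$. If $\mathfrak{d}_\kappa<{\rm cf}(2^\kappa)$, then $\mathrm{Gal}(\mathcal{D}_\kappa,2^\kappa,2^\kappa)$ holds.
   Context: $\mathcal{D}_\kappa$ is the club filter on $\kappa$. $\mathrm{Gal}(\mathcal{F},\mu,\lambda)$: for every $\mathcal{C}\subseteq\mathcal{F}$ with $|\mathcal{C}|=\lambda$ there is $\mathcal{E}\subseteq\mathcal{C}$ with $|\mathcal{E}|=\mu$ and $\bigcap\mathcal{E}\in\mathcal{F}$. For $f,g\in{}^\kappa\kappa$, $f\leq^*g$ means $|\{\alpha<\kappa\mid f(\alpha)>g(\alpha)\}|<\kappa$; $\mathfrak{d}_\kappa$ is the least size of a family $\mathcal{D}\subseteq{}^\kappa\kappa$ such that every $f\in{}^\kappa\kappa$ satisfies $f\leq^*g$ for some $g\in\mathcal{D}$. *)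

(* Defs.v *)
From mathcomp Require Import all_boot.
From mathcomp Require Import boolp classical_sets cardinality.
Set Implicit Arguments. Unset Strict Implicit. Unset Printing Implicit Defensive.
Local Open Scope classical_set_scope.
Local Open Scope card_scope.

(* An ordinal is represented by a type carrying a strict well-order. *)
Definition strict_well_order (T : Type) (lt : T -> T -> Prop) : Prop :=
  [/\ (forall x, ~ lt x x),
      (forall x y z, lt x y -> lt y z -> lt x z),
      (forall x y, [\/ x = y, lt x y | lt y x]) &
      well_founded lt].

(* (T, lt) is an initial ordinal, i.e. an infinite-or-finite cardinal viewed
   as the ordinal of its elements: every proper initial segment has strictly
   smaller cardinality than the whole. *)
Definition initial_ordinal (T : Type) (lt : T -> T -> Prop) : Prop :=
  strict_well_order lt /\
  forall a : T, ~ ([set: T] #<= [set b | lt b a]).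

(* kappa^{<kappa} = kappa : the set of pairs (alpha, f) with alpha < kappa
   and f : alpha -> kappa has cardinality kappa. *)
Definition less_than_pow_eq (K : Type) (lt : K -> K -> Prop) : Prop :=
  [set: {a : K & {b : K | lt b a} -> K}] #= [set: K].

Definition unbounded (K : Type) (lt : K -> K -> Prop) (C : set K) : Prop :=
  forall a, exists b, lt a b /\ C b.

(* closed: every nonzero a below which C is unbounded (necessarily a limit)
   belongs to C *)
Definition closed (K : Type) (lt : K -> K -> Prop) (C : set K) : Prop :=
  forall a, (exists b, lt b a) ->
    (forall b, lt b a -> exists c, [/\ lt b c, lt c a & C c]) -> C a.

Definition club (K : Type) (lt : K -> K -> Prop) (C : set K) : Prop :=
  closed lt C /\ unbounded lt C.

Definition club_filter (K : Type) (lt : K -> K -> Prop) : set (set K) :=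
  [set A | exists C, club lt C /\ C `<=` A].

(* Gal(F, mu, lambda), with mu, lambda given as (cardinalities of) sets *)
Definition Gal (T : Type) (F : set (set T)) (U V : Type) (mu : set U) (lam : set V) : Prop :=
  forall Cc : set (set T), Cc `<=` F -> Cc #= lam ->
    exists E : set (set T), [/\ E `<=` Cc, E #= mu &
       F [set x | forall A, E A -> A x]].

Definition le_star (K : Type) (lt : K -> K -> Prop) (f g : K -> K) : Prop :=
  ~ ([set: K] #<= [set a | lt (g a) (f a)]).

Definition dominating (K : Type) (lt : K -> K -> Prop) (D : set (K -> K)) : Prop :=
  forall f, exists2 g, D g & le_star lt f g.

Definition cofinal (M : Type) (ltM : M -> M -> Prop) (X : set M) : Prop :=
  forall m, exists x, X x /\ (m = x \/ ltM m x).

(* d_kappa < cf(mu), where mu is presented as an initial ordinal (M, ltM):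
   some dominating family is strictly smaller than every cofinal subset of M. *)
Definition dnum_lt_cf (K : Type) (lt : K -> K -> Prop)
    (M : Type) (ltM : M -> M -> Prop) : Prop :=
  exists D : set (K -> K), dominating lt D /\
    forall X : set M, cofinal ltM X -> ~ (X #<= D).

(* Main.v *)
Require Import Defs.
From mathcomp Require Import all_boot.
From mathcomp Require Import boolp classical_sets cardinality.
From mathcomp Require Import functions.
From Stdlib Require Import ClassicalEpsilon.
From Stdlib Require Import Eqdep.
Local Open Scope classical_set_scope.
Local Open Scope card_scope.

Set Implicit Arguments.

Lemma cle_fun T U (A : set T) (B : set U) (f : T -> U) :
  (forall x, A x -> B (f x)) -> (forall x y, A x -> A y -> f x = f y -> x = y) -> A #<= B.
Proof.
move=> fAB finj.
have h1 : f @` A #= A by apply: inj_card_eq => x y; rewrite !inE; exact: finj.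
move/card_eqPle: h1 => [_ h1].
apply: card_le_trans h1 _; apply: subset_card_le => _ [x Ax <-]; exact: fAB.
Qed.

Lemma cle_ex T U (A : set T) (B : set U) (u0 : U) : A #<= B ->
  exists f : T -> U, (forall x, A x -> B (f x)) /\ (forall x y, A x -> A y -> f x = f y -> x = y).
Proof.
move/card_leP/injfunPex => [F Ffun Finj].
exists (fun x => match pselect (A x) with left h => set_val (F (SigSub (mem_set h))) | right _ => u0 end).
split.
- move=> x Ax; case: pselect => // h. 
  exact: set_valP (F (SigSub (mem_set h))).
- move=> x y Ax Ay; case: pselect => // hx; case: pselect => // hy.
  move=> /val_inj e; have := Finj _ _ (in_setT _) (in_setT _) e.
  by move=> /(congr1 val).
Qed.


Lemma Rec (G U : Type) (r : G -> G -> Prop) (A : set G) (W : set U) :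
  well_founded r -> (forall x y, [\/ x = y, r x y | r y x]) ->
  (forall x, A x -> ~ (W #<= [set y | A y /\ r y x])) -> A #<= W.
Proof.
move=> wf tri H.
have [A0|] := eqVneq A set0; first by rewrite A0; exact: card_ge0.
move/set0P => [x0 Ax0].
have [W0|] := eqVneq W set0.
  by exfalso; apply: (H x0 Ax0); rewrite W0; exact: card_ge0.
move/set0P => [u0 Wu0].
pose F := fun x (rec : forall y, r y x -> U) =>
  epsilon (inhabits u0) (fun u => W u /\ forall y (h : r y x), A y -> rec y h <> u).
pose phi := Fix wf (fun _ => U) F.
have phiE x : phi x = F x (fun y _ => phi y).
  rewrite /phi Fix_eq // => z f g fg; rewrite /F.
  have -> : f = g by apply: functional_extensionality_dep => y;
     apply: functional_extensionality_dep => p; exact: fg.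
  by [].
have claim x : A x -> W (phi x) /\ forall y, A y -> r y x -> phi y <> phi x.
  move=> Ax; rewrite phiE /F.
  have ex : exists u, W u /\ forall y (h : r y x), A y -> phi y <> u.
    apply: contrapT => nex; apply: (H x Ax).
    apply: card_le_trans (card_image_le phi _).
    apply: subset_card_le => u Wu; apply: contrapT => nim; apply: nex.
    exists u; split => // y h Ay e; apply: nim; exists y => //.
  have := epsilon_spec (inhabits u0) _ ex; set v := epsilon _ _.
  move=> [Wv Hv]; split => // y Ay ryx; exact: Hv.
apply: (@cle_fun _ _ _ _ phi) => [x Ax|x y Ax Ay e]; first by case: (claim x Ax).
case: (tri x y) => // h.
  by exfalso; case: (claim y Ay) => _ /(_ x Ax h).
by exfalso; case: (claim x Ax) => _ /(_ y Ay h); rewrite e.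
Qed.


Lemma shift_le T (X : set T) (p : T) : ~ finite_set X -> X `|` [set p] #<= X.
Proof.
move=> Xinf.
have [Xp|nXp] := pselect (X p).
  by apply: subset_card_le => x [//|->].
have /infiniteP := Xinf.
have [x0 Xx0] : exists x, X x.
  apply: contrapT => nx; apply: Xinf; have -> : X = set0.
    by apply/seteqP; split => // x Xx; apply: nx; exists x.
  exact: finite_set0.
move=> /(@cle_ex _ _ _ _ x0) [nu [nuX nuinj]].
pose psi v := if pselect (v = p) then nu 0%N else
  match pselect (exists n, v = nu n) with
  | left h => nu (projT1 (cid h)).+1
  | right _ => v end.
apply: (@cle_fun _ _ _ _ psi).
  move=> v Hv; rewrite /psi; destruct (pselect (v = p)) as [vp0|vp]; first exact: nuX.
  destruct (pselect (exists n, v = nu n)) as [h|nh0]; first exact: nuX.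
  by case: Hv.
move=> v w Hv Hw; rewrite /psi.
destruct (pselect (v = p)) as [->|vp]; destruct (pselect (w = p)) as [->|wp]; try done.
- destruct (pselect (exists n, w = nu n)) as [h|nh].
    by move=> /nuinj => /(_ I I).
  by move=> e; exfalso; apply: nh; exists 0%N.
- destruct (pselect (exists n, v = nu n)) as [h|nh].
    by move=> /nuinj => /(_ I I).
  by move=> e; exfalso; apply: nh; exists 0%N.
- destruct (pselect (exists n, v = nu n)) as [h|nh]; destruct (pselect (exists n, w = nu n)) as [h'|nh'].
  + move=> /nuinj => /(_ I I) [] e.
    have e1 := projT2 (cid h); have e2 := projT2 (cid h').
    by rewrite /= in e1 e2; rewrite e1 e2 e.
  + by move=> e; exfalso; apply: nh'; exists (projT1 (cid h)).+1.
  + by move=> e; exfalso; apply: nh; exists (projT1 (cid h')).+1.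
  + by [].
Qed.

Definition le_ T (r : T -> T -> Prop) x y := x = y \/ r x y.

Lemma swo_tri T (r : T -> T -> Prop) : strict_well_order r -> forall x y, [\/ x = y, r x y | r y x].
Proof. by case. Qed.

Lemma swo_irr T (r : T -> T -> Prop) : strict_well_order r -> forall x, ~ r x x.
Proof. by case. Qed.

Lemma swo_trans T (r : T -> T -> Prop) : strict_well_order r -> forall x y z, r x y -> r y z -> r x z.
Proof. by case. Qed.

Lemma swo_wf T (r : T -> T -> Prop) : strict_well_order r -> well_founded r.
Proof. by case. Qed.

Lemma swo_nlt T (r : T -> T -> Prop) : strict_well_order r -> forall x y, ~ r x y -> y = x \/ r y x.
Proof. by move=> s x y nxy; case: (swo_tri s x y) => [->|//|]; [left|right]. Qed.

Lemma swo_min T (r : T -> T -> Prop) : strict_well_order r -> forall S : set T, (exists x, S x) ->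
  exists m, S m /\ forall y, S y -> ~ r y m.
Proof.
move=> s S [x Sx]; apply: contrapT => nm.
suff : forall z, ~ S z by move/(_ x).
move=> z; elim/(well_founded_ind (swo_wf s)): z => z IH Sz.
by apply: nm; exists z; split => // y Sy ryz; exact: (IH y ryz).
Qed.

Lemma small_seg_bound T (r : T -> T -> Prop) (B : set T) : strict_well_order r ->
  ~ ([set: T] #<= B) -> exists a, B #<= [set b | r b a].
Proof.
move=> s nTB; apply: contrapT => nex; apply: nTB.
apply: Rec; [exact: swo_wf s| exact: swo_tri s|] => x _ hle.
apply: nex; exists x; apply: card_le_trans hle _.
by apply: subset_card_le => y [].
Qed.


Lemma inf_of_unc K : ~ countable [set: K] -> ~ finite_set [set: K].
Proof. by move=> H /finite_set_countable. Qed.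

Lemma inh_of_inf K (X : set K) : ~ finite_set X -> exists k, X k.
Proof.
move=> Xinf; apply: contrapT => nx; apply: Xinf; have -> : X = set0.
  by apply/seteqP; split => // x Xx; apply: nx; exists x.
exact: finite_set0.
Qed.

Lemma finite_small K U (B : set U) : ~ finite_set [set: K] -> finite_set B -> ~ ([set: K] #<= B).
Proof. by move=> Kinf Bf h; apply: Kinf; apply: card_le_finite h Bf. Qed.

Lemma cseg_small K (lt : K -> K -> Prop) : initial_ordinal lt -> ~ finite_set [set: K] ->
  forall a, ~ ([set: K] #<= [set b | b = a \/ lt b a]).
Proof.
move=> [s Hi] Kinf a.
have -> : [set b | b = a \/ lt b a] = [set b | lt b a] `|` [set a].
  by apply/seteqP; split => b /=; case; auto.
have [fin|inf] := pselect (finite_set [set b | lt b a]).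
  apply: finite_small => //; rewrite finite_setU; split => //; exact: finite_set1.
move=> h; apply: (Hi a); apply: card_le_trans h _; exact: shift_le.
Qed.

Lemma nomax K (lt : K -> K -> Prop) : initial_ordinal lt -> ~ finite_set [set: K] ->
  forall a, exists v, lt a v.
Proof.
move=> HK Kinf a; apply: contrapT => nv; apply: (cseg_small HK Kinf a).
apply: subset_card_le => b _ /=.
case: (swo_tri HK.1 a b) => [->|h|]; [by left| |by right].
by exfalso; apply: nv; exists b.
Qed.

Lemma reg_weak K (lt : K -> K -> Prop) : initial_ordinal lt -> ~ countable [set: K] ->
  less_than_pow_eq lt ->
  forall B : set K, ~ ([set: K] #<= B) -> exists a, forall b, B b -> ~ lt a b.
Proof.
move=> HK Hunc Hpow B Bsmall.
have Kinf := inf_of_unc Hunc.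
have [k0 _] := inh_of_inf Kinf.
apply: contrapT => nb.
have unb : forall a, exists b, B b /\ lt a b.
  move=> a; apply: contrapT => nab; apply: nb; exists a => b Bb lab; apply: nab; by exists b.
have [a0 Ba0] := small_seg_bound B HK.1 Bsmall.
have [io [ioB ioinj]] := @cle_ex _ _ _ _ k0 Ba0.
pose rho c := epsilon (inhabits k0) (fun b => B b /\ io b = c).
have rhoK b : B b -> rho (io b) = b.
  move=> Bb; have ex : exists b', B b' /\ io b' = io b by exists b.
  have [Br e] := epsilon_spec (inhabits k0) _ ex.
  exact: ioinj.
move: Hpow; rewrite /less_than_pow_eq => /card_eqPle [/(@cle_ex _ _ _ _ k0) [sg [_ sginj]] _].
pose enc (h : K -> K) : {a : K & {b : K | lt b a} -> K} :=
  existT _ a0 (fun c : {b : K | lt b a0} => h (rho (proj1_sig c))).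
pose F h := sg (enc h).
have FE h h' : F h = F h' -> forall b, B b -> h b = h' b.
  move=> e0 b Bb; have e1 := sginj _ _ I I e0.
  have e := inj_pair2 _ _ _ _ _ e1.
  have := congr1 (fun f => f (exist _ (io b) (ioB b Bb))) e => /=.
  by rewrite rhoK.
have diag b : B b -> exists z, ~ exists y, lt (F y) b /\ y b = z.
  move=> Bb; apply: contrapT => nz; apply: (HK.2 b).
  have allz z : exists y, lt (F y) b /\ y b = z.
    by apply: contrapT => ny; apply: nz; exists z.
  pose Y z := epsilon (inhabits (fun x : K => x)) (fun y => lt (F y) b /\ y b = z).
  apply: (@cle_fun _ _ _ _ (fun z => F (Y z))).
    by move=> z _; have [h1 _] := epsilon_spec (inhabits (fun x : K => x)) _ (allz z).
  move=> z z' _ _ e.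
  have [_ e1] := epsilon_spec (inhabits (fun x : K => x)) _ (allz z).
  have [_ e2] := epsilon_spec (inhabits (fun x : K => x)) _ (allz z').
  by rewrite -e1 -e2; apply: FE.
pose h b := epsilon (inhabits k0) (fun z => ~ exists y, lt (F y) b /\ y b = z).
have [b [Bb ltb]] := unb (F h).
have := epsilon_spec (inhabits k0) _ (diag b Bb).
by apply; exists h.
Qed.


Lemma reg K (lt : K -> K -> Prop) : initial_ordinal lt -> ~ countable [set: K] ->
  less_than_pow_eq lt ->
  forall B : set K, ~ ([set: K] #<= B) -> exists a, forall b, B b -> lt b a.
Proof.
move=> HK Hunc Hpow B Bs.
have [w Hw] := reg_weak HK Hunc Hpow _ Bs.
have [v wv] := nomax HK (inf_of_unc Hunc) w.
exists v => b Bb; have := Hw b Bb => /(swo_nlt HK.1) [->//|bw].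
exact: swo_trans HK.1 _ _ _ bw wv.
Qed.

Lemma ub3 K (lt : K -> K -> Prop) : initial_ordinal lt -> ~ countable [set: K] ->
  less_than_pow_eq lt -> forall x y z, exists v, [/\ lt x v, lt y v & lt z v].
Proof.
move=> HK Hunc Hpow x y z.
have [v Hv] := reg HK Hunc Hpow [set x; y; z]
  (finite_small (inf_of_unc Hunc) (finite_set3 x y z)).
exists v; split; apply: Hv; rewrite /setU /set1 /=; tauto.
Qed.

Definition Zc K (lt : K -> K -> Prop) (g : K -> K) (beta : K) :=
  [set d | lt beta d /\ forall c, lt c d -> lt (g c) d].

Lemma Zc_closed K (lt : K -> K -> Prop) g beta : initial_ordinal lt -> Defs.closed lt (Zc lt g beta).
Proof.
move=> HK a [b0 b0a] H; split.
  have [c [_ ca [bc _]]] := H b0 b0a; exact: swo_trans HK.1 _ _ _ bc ca.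
move=> c ca; have [z [cz za [_ Hz]]] := H c ca.
exact: swo_trans HK.1 _ _ _ (Hz c cz) za.
Qed.

Lemma Zc_unb K (lt : K -> K -> Prop) g beta : initial_ordinal lt -> ~ countable [set: K] ->
  less_than_pow_eq lt -> unbounded lt (Zc lt g beta).
Proof.
move=> HK Hunc Hpow a.
have Kinf := inf_of_unc Hunc.
have s := HK.1.
have [k0 _] := inh_of_inf Kinf.
have next x : exists v, [/\ lt x v, lt beta v & forall c, c = x \/ lt c x -> lt (g c) v].
  have Bs : ~ ([set: K] #<= g @` [set c | c = x \/ lt c x]).
    move=> h; apply: (cseg_small HK Kinf x); apply: card_le_trans h _.
    exact: card_image_le.
  have [w Hw] := reg HK Hunc Hpow _ Bs.
  have [v [wv xv bv]] := ub3 HK Hunc Hpow w x beta.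
  exists v; split => // c hc.
  apply: swo_trans s _ _ _ (Hw _ _) wv; by exists c.
pose nx x := epsilon (inhabits k0) (fun v => [/\ lt x v, lt beta v & forall c, c = x \/ lt c x -> lt (g c) v]).
have nxP x := epsilon_spec (inhabits k0) _ (next x).
pose sq := fix sq n := if n is n'.+1 then nx (sq n') else a.
have sqS n : sq n.+1 = nx (sq n) by [].
have Rs : ~ ([set: K] #<= range sq).
  move=> h; apply: Hunc; apply: card_le_trans h _; exact: card_image_le.
have [w Hw] := reg_weak HK Hunc Hpow _ Rs.
have [d [Ud dmin]] := swo_min s [set v | forall n, ~ lt v (sq n)] (ex_intro _ w (fun n => Hw _ (ex_intro2 _ _ n I erefl))).
have sqd n : lt (sq n) d.
  have := Ud n.+1 => /(swo_nlt s) h.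
  have [h0 _ _] := nxP (sq n); have h1 : lt (sq n) (sq n.+1) := h0.
  by case: h => [<-//|h]; exact: swo_trans s _ _ _ h1 h.
exists d; split; first exact: (sqd 0%N).
split.
  have [_ h0 _] := nxP a; have h1 : lt beta (sq 1%N) := h0.
  have := Ud 1%N => /(swo_nlt s) [<-//|h]; exact: swo_trans s _ _ _ h1 h.
move=> c cd.
have [n cn] : exists n, lt c (sq n).
  apply: contrapT => nn; apply: (dmin c) => // n cn; apply: nn; by exists n.
have [_ _ h3] := nxP (sq n).
exact: swo_trans s _ _ _ (h3 c (or_intror cn)) (sqd n.+1).
Qed.

Lemma Zc_sub K (lt : K -> K -> Prop) (C : set K) f g beta : initial_ordinal lt ->
  club lt C -> (forall x, lt x (f x) /\ C (f x)) ->
  (forall x, ~ lt x beta -> ~ lt (g x) (f x)) -> Zc lt g beta `<=` C.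
Proof.
move=> HK [Ccl _] Hf Hg d [bd Hd].
have s := HK.1.
apply: Ccl; first by exists beta.
move=> b bd'.
have key x : ~ lt x beta -> lt x d -> lt (f x) d.
  move=> nx xd; have := Hg x nx => /(swo_nlt s) [->|h]; first exact: Hd.
  exact: swo_trans s _ _ _ h (Hd x xd).
have [bb|nbb] := pselect (lt b beta).
  have [h1 h2] := Hf beta.
  exists (f beta); split => //; last exact: key (swo_irr s beta) bd.
  exact: swo_trans s _ _ _ bb h1.
have [h1 h2] := Hf b; exists (f b); split => //; exact: key.
Qed.


Lemma ne_le T U (A : set T) (B : set U) : A #<= B -> (exists a, A a) -> exists b, B b.
Proof.
move=> h [a Aa]; apply: contrapT => nb.
have B0 : B = set0 by apply/seteqP; split => // b Bb; apply: nb; exists b.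
rewrite B0 in h; move/card_le0P: h => A0.
by rewrite A0 in Aa.
Qed.

Lemma setX_le T T' U U' (A : set T) (A' : set U) (B : set T') (B' : set U') :
  A #<= A' -> B #<= B' -> A `*` B #<= A' `*` B'.
Proof.
move=> hA hB.
have [ne|e] := pselect (exists p, (A `*` B) p); last first.
  have -> : A `*` B = set0 by apply/seteqP; split => // p Hp; apply: e; exists p.
  exact: card_ge0.
have [[a b] [Aa Bb]] := ne.
have [a' _] := @ne_le _ _ _ _ hA (ex_intro _ a Aa).
have [b' _] := @ne_le _ _ _ _ hB (ex_intro _ b Bb).
have [f [fA finj]] := @cle_ex _ _ _ _ a' hA.
have [g [gB ginj]] := @cle_ex _ _ _ _ b' hB.
apply: (@cle_fun _ _ _ _ (fun p => (f p.1, g p.2))).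
  by move=> p [h1 h2]; split; [exact: fA|exact: gB].
move=> [x y] [x' y'] [/= Ax By] [/= Ax' By'] [] /finj e1 /ginj e2.
by rewrite (e1 Ax Ax') (e2 By By').
Qed.

Definition mx T (r : T -> T -> Prop) x y := if pselect (r x y) then y else x.

Definition god T (r : T -> T -> Prop) (p q : T * T) :=
  r (mx r p.1 p.2) (mx r q.1 q.2) \/
  (mx r p.1 p.2 = mx r q.1 q.2 /\ (r p.1 q.1 \/ (p.1 = q.1 /\ r p.2 q.2))).

Lemma mx_ge1 T (r : T -> T -> Prop) : strict_well_order r -> forall x y, ~ r (mx r x y) x.
Proof.
move=> s x y; rewrite /mx; case: (pselect (r x y)) => [h|h0] /=; last exact: (swo_irr s x).
by move=> h'; apply: (swo_irr s x); exact: swo_trans s _ _ _ h h'.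
Qed.

Lemma mx_ge2 T (r : T -> T -> Prop) : strict_well_order r -> forall x y, ~ r (mx r x y) y.
Proof.
move=> s x y; rewrite /mx; case: (pselect (r x y)) => [h0|h] /=; first exact: (swo_irr s y).
exact: h.
Qed.

Lemma mx_or T (r : T -> T -> Prop) x y : mx r x y = x \/ mx r x y = y.
Proof. by rewrite /mx; case: (pselect (r x y)) => ? /=; auto. Qed.

Lemma god_wf T (r : T -> T -> Prop) : strict_well_order r -> well_founded (god r).
Proof.
move=> s.
have wf := swo_wf s.
suff H : forall m p, mx r p.1 p.2 = m -> Acc (god r) p.
  by move=> p; exact: H _ p erefl.
move=> m; elim/(well_founded_ind wf): m => m IHm [x y] /=.
elim/(well_founded_ind wf): x y => x IHx y.
elim/(well_founded_ind wf): y => y IHy em.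
constructor => [[x' y']] [/= h|[/= e h]].
  by apply: (IHm _ _ (x', y') erefl); rewrite -em.
case: h => [h|[ex h]].
  by apply: (IHx x' h y'); rewrite e.
by rewrite ex in e *; apply: IHy => //; rewrite e.
Qed.

Lemma god_tri T (r : T -> T -> Prop) : strict_well_order r ->
  forall p q, [\/ p = q, god r p q | god r q p].
Proof.
move=> s [x y] [x' y']; rewrite /god /=.
case: (swo_tri s (mx r x y) (mx r x' y')) => [em|h|h];
  [|by apply: Or32; left|by apply: Or33; left].
case: (swo_tri s x x') => [ex|h|h];
  [|by apply: Or32; right; split => //; left|by apply: Or33; right; split => //; left].
case: (swo_tri s y y') => [ey|h|h];
  [|by apply: Or32; right; split => //; right; split|by apply: Or33; right; split => //; right; split].
by apply: Or31; rewrite ex ey.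
Qed.

Lemma god_seg T (r : T -> T -> Prop) : strict_well_order r -> forall p q,
  god r p q -> (p.1 = mx r q.1 q.2 \/ r p.1 (mx r q.1 q.2)) /\ (p.2 = mx r q.1 q.2 \/ r p.2 (mx r q.1 q.2)).
Proof.
move=> s [x y] [x' y'] /= h.
have hx := swo_nlt s _ _ (mx_ge1 s x y).
have hy := swo_nlt s _ _ (mx_ge2 s x y).
case: h => [h|[e _]]; last by rewrite -e.
split; right.
  by case: hx => [e|h']; [rewrite e|exact: swo_trans s _ _ _ h' h].
by case: hy => [e|h']; [rewrite e|exact: swo_trans s _ _ _ h' h].
Qed.


Lemma hess T (r : T -> T -> Prop) : strict_well_order r -> forall e,
  ~ finite_set [set b | r b e] -> [set b | r b e] `*` [set b | r b e] #<= [set b | r b e].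
Proof.
move=> s e; elim/(well_founded_ind (swo_wf s)): e => e IH einf.
have [[e' [e'e le]]|nB] := pselect (exists e', r e' e /\ [set b | r b e] #<= [set b | r b e']).
  have e'inf : ~ finite_set [set b | r b e'] by move=> f; apply: einf; exact: card_le_finite le f.
  apply: card_le_trans (@setX_le _ _ _ _ _ _ _ _ le le) _.
  apply: card_le_trans (IH e' e'e e'inf) _.
  by apply: subset_card_le => b /= h; exact: swo_trans s _ _ _ h e'e.
apply: Rec; [exact: god_wf s|exact: god_tri s|].
move=> [x y] [/= xe ye] hle.
set m := mx r x y.
have me : r m e by rewrite /m; case: (mx_or r x y) => ->.
have sub : [set p | ([set b | r b e] `*` [set b | r b e]) p /\ god r p (x, y)] `<=`
           [set b | b = m \/ r b m] `*` [set b | b = m \/ r b m].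
  by move=> p [_ /(god_seg s) [h1 h2]].
have hle2 := card_le_trans hle (subset_card_le sub).
have csE : [set b | b = m \/ r b m] = [set b | r b m] `|` [set m].
  by apply/seteqP; split => b /=; case; auto.
have [fin|inf] := pselect (finite_set [set b | r b m]).
  apply: einf; apply: card_le_finite hle2 _; apply: finite_setX; rewrite csE finite_setU;
    by split => //; exact: finite_set1.
apply: nB; exists m; split => //.
apply: card_le_trans hle2 _.
have h1 : [set b | b = m \/ r b m] #<= [set b | r b m] by rewrite csE; exact: shift_le.
apply: card_le_trans (@setX_le _ _ _ _ _ _ _ _ h1 h1) _.
exact: IH m me inf.
Qed.

Lemma hess_small T (r : T -> T -> Prop) : initial_ordinal r -> ~ finite_set [set: T] -> forall e,
  ~ ([set: T] #<= [set b | r b e] `*` [set b | r b e]).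
Proof.
move=> [s Hi] Tinf e h.
have [fin|inf] := pselect (finite_set [set b | r b e]).
  by apply: Tinf; apply: card_le_finite h _; exact: finite_setX.
by apply: (Hi e); apply: card_le_trans h (hess s e inf).
Qed.


Lemma PH M (ltM : M -> M -> Prop) T (S : set T) Q (P : set Q) (pi : T -> Q) :
  initial_ordinal ltM -> ~ finite_set [set: M] -> [set: M] #<= S ->
  P #<= [set: M] -> (forall X : set M, cofinal ltM X -> ~ (X #<= P)) ->
  (forall t, S t -> P (pi t)) ->
  exists q, P q /\ [set: M] #<= [set t | S t /\ pi t = q].
Proof.
move=> HM Minf MS PM Hcof piP.
have s := HM.1.
have [m0 _] := inh_of_inf Minf.
apply: contrapT => nfib.
have nfib' q : P q -> ~ ([set: M] #<= [set t | S t /\ pi t = q]).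
  by move=> Pq h; apply: nfib; exists q.
have [t0 _] := @ne_le _ _ _ _ MS (ex_intro _ m0 I).
have [c [cS cinj]] := @cle_ex _ _ _ _ t0 MS.
pose FM q := [set m : M | pi (c m) = q].
have FMs q : P q -> ~ ([set: M] #<= FM q).
  move=> Pq h; apply: (nfib' q Pq); apply: card_le_trans h _.
  apply: (@cle_fun _ _ _ _ c) => [m /= e|m1 m2 _ _]; first by split => //; exact: cS.
  exact: cinj.
have exa q : exists a, P q -> FM q #<= [set b | ltM b a].
  have [Pq|nPq] := pselect (P q); last by exists m0.
  have [a Ha] := small_seg_bound (FM q) s (FMs q Pq); by exists a.
pose aq q := epsilon (inhabits m0) (fun a => P q -> FM q #<= [set b | ltM b a]).
have aqP q : P q -> FM q #<= [set b | ltM b (aq q)].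
  exact: epsilon_spec (inhabits m0) _ (exa q).
have exi q : exists f : M -> M, P q -> (forall m, FM q m -> ltM (f m) (aq q)) /\ (forall m1 m2, FM q m1 -> FM q m2 -> f m1 = f m2 -> m1 = m2).
  have [Pq|nPq] := pselect (P q); last by exists id.
  have [f Hf] := @cle_ex _ _ _ _ m0 (aqP q Pq); by exists f.
pose iq q := epsilon (inhabits (fun m : M => m)) (fun f => P q -> (forall m, FM q m -> ltM (f m) (aq q)) /\ (forall m1 m2, FM q m1 -> FM q m2 -> f m1 = f m2 -> m1 = m2)).
have iqP q : P q -> (forall m, FM q m -> ltM (iq q m) (aq q)) /\ (forall m1 m2, FM q m1 -> FM q m2 -> iq q m1 = iq q m2 -> m1 = m2).
  exact: epsilon_spec (inhabits (fun m : M => m)) _ (exi q).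
have [m1 Hm1] : exists m1, forall q, P q -> ltM (aq q) m1.
  have nc : ~ cofinal ltM (aq @` P) by move=> hc; exact: Hcof _ hc (card_image_le aq P).
  apply: contrapT => nm; apply: nc => m; apply: contrapT => nx; apply: nm; exists m => q Pq.
  case: (swo_tri s (aq q) m) => [e|//|h]; exfalso; apply: nx; exists (aq q); split.
  - by exists q.
  - by left.
  - by exists q.
  - by right.
have Psmall : ~ ([set: M] #<= P).
  apply: Hcof => m; exists m; split => //; by left.
have [j [_ jinj]] := @cle_ex _ _ _ _ m0 PM.
have jE : j @` P #= P by apply: inj_card_eq => x y; rewrite !inE; exact: jinj.
move/card_eqPle: jE => [jP Pj].
have [d Pd0] := small_seg_bound (j @` P) s (fun h => Psmall (card_le_trans h jP)).
have Pd := card_le_trans Pj Pd0.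
have [kp [kpd kpinj]] := @cle_ex _ _ _ _ m0 Pd.
pose e := mx ltM d m1.
have de b : ltM b d -> ltM b e.
  move=> h; have := swo_nlt s _ _ (mx_ge1 s d m1) => -[e0|h']; [by rewrite /e -e0|exact: swo_trans s _ _ _ h h'].
have m1e b : ltM b m1 -> ltM b e.
  move=> h; have := swo_nlt s _ _ (mx_ge2 s d m1) => -[e0|h']; [by rewrite /e -e0|exact: swo_trans s _ _ _ h h'].
apply: (hess_small HM Minf e).
apply: (@cle_fun _ _ _ _ (fun m => (kp (pi (c m)), iq (pi (c m)) m))).
  move=> m _; have Pq := piP _ (cS m I); split => /=.
    exact: de (kpd _ Pq).
  apply: m1e; apply: swo_trans s _ _ _ _ (Hm1 _ Pq).
  by have [h _] := iqP _ Pq; apply: h.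
move=> ma mb _ _ [] /kpinj e1 e2.
have Pa := piP _ (cS ma I); have Pb := piP _ (cS mb I).
have eq := e1 Pa Pb; rewrite -eq in e2.
have [_ h] := iqP _ Pa; apply: h e2 => //.
Qed.


Lemma cantor K (k0 : K) : ~ ([set: set K] #<= [set: K]).
Proof.
move=> /(@cle_ex _ _ _ _ k0) [io [_ ioinj]].
pose Ts := [set x | exists S, io S = x /\ ~ S x].
have [h|h] := pselect (Ts (io Ts)).
  have [S [e nS]] := h; have eS := ioinj _ _ I I e.
  by apply: nS; rewrite eS.
by apply: (h); exists Ts; split.
Qed.

Lemma single_le K : [set: K] #<= [set: set K].
Proof.
apply: (@cle_fun _ _ _ _ (fun x => [set x])) => // x y _ _ e.
have : [set x] x by []. by rewrite e.
Qed.

Lemma fun_le K (lt : K -> K -> Prop) : initial_ordinal lt -> ~ countable [set: K] ->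
  less_than_pow_eq lt -> [set: K -> K] #<= [set: set K].
Proof.
move=> HK Hunc Hpow.
have Kinf := inf_of_unc Hunc.
have [k0 _] := inh_of_inf Kinf.
move: Hpow; rewrite /less_than_pow_eq => /card_eqPle [/(@cle_ex _ _ _ _ k0) [sg [_ sginj]] _].
pose code (h : K -> K) a : {a : K & {b : K | lt b a} -> K} :=
  existT _ a (fun c : {b : K | lt b a} => h (proj1_sig c)).
pose Sh h := [set z | exists a, z = sg (code h a)].
apply: (@cle_fun _ _ _ _ Sh) => // h h' _ _ e.
apply: funext => x.
have [a xa] := nomax HK Kinf x.
have : Sh h (sg (code h a)) by exists a.
rewrite e => -[b] /(sginj _ _ I I) e1.
have eab : a = b := congr1 (@projT1 _ _) e1.
subst b; have e2 := inj_pair2 _ _ _ _ _ e1.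
exact: (congr1 (fun f => f (exist _ x xa)) e2).
Qed.

Lemma K_le_D K (lt : K -> K -> Prop) M (ltM : M -> M -> Prop) (D : set (K -> K)) :
  initial_ordinal lt -> ~ countable [set: K] -> less_than_pow_eq lt ->
  strict_well_order ltM -> D #<= [set: M] -> dominating lt D -> [set: K] #<= D.
Proof.
move=> HK Hunc Hpow sM DM Hdom.
have Kinf := inf_of_unc Hunc.
have s := HK.1.
have [k0 _] := inh_of_inf Kinf.
have [g0 Dg0 _] := Hdom (fun x => x).
have [m0 _] := @ne_le _ _ _ _ DM (ex_intro _ g0 Dg0).
apply: contrapT => nKD.
have [j [_ jinj]] := @cle_ex _ _ _ _ m0 DM.
have jE : j @` D #= D by apply: inj_card_eq => x y; rewrite !inE; exact: jinj.
move/card_eqPle: jE => [jD Dj].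
have DK : D #<= [set: K].
  apply: card_le_trans Dj _; apply: Rec; [exact: swo_wf sM|exact: swo_tri sM|].
  move=> x _ h; apply: nKD; apply: card_le_trans h _; apply: card_le_trans _ jD.
  by apply: subset_card_le => y [].
have [io [_ ioinj]] := @cle_ex _ _ _ _ k0 DK.
have exv a : exists v, forall g, D g -> lt (io g) a -> lt (g a) v.
  have Bs : ~ ([set: K] #<= (fun g => g a) @` [set g | D g /\ lt (io g) a]).
    move=> h; apply: (HK.2 a); apply: card_le_trans h _.
    apply: card_le_trans (card_image_le _ _) _.
    apply: (@cle_fun _ _ _ _ io) => [g [_ h1]//|g g' [Dg _] [Dg' _]].
    exact: ioinj.
  have [v Hv] := reg HK Hunc Hpow _ Bs.
  by exists v => g Dg ha; apply: Hv; exists g.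
pose f a := epsilon (inhabits k0) (fun v => forall g, D g -> lt (io g) a -> lt (g a) v).
have fP a := epsilon_spec (inhabits k0) _ (exv a).
have [g Dg hle] := Hdom f.
apply: hle.
have tail : [set: K] #<= [set a | lt (io g) a].
  apply: contrapT => h; have [w Hw] := reg_weak HK Hunc Hpow _ h.
  have [v [wv iv _]] := ub3 HK Hunc Hpow w (io g) (io g).
  exact: Hw v iv wv.
apply: card_le_trans tail _.
apply: subset_card_le => a ia; exact: fP a g Dg ia.
Qed.

Unset Implicit Arguments.
Theorem corollary5p6 (K : Type) (lt : K -> K -> Prop)
  (M : Type) (ltM : M -> M -> Prop) :
  initial_ordinal lt ->
  ~ countable [set: K] ->
  less_than_pow_eq lt ->
  initial_ordinal ltM ->
  [set: M] #= [set: set K] ->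
  dnum_lt_cf lt ltM ->
  Gal (club_filter lt) [set: set K] [set: set K].
Proof.
move=> HK Hunc Hpow HM MK [D [Hdom Hcof]] Cc CcF CcE.
have Kinf := inf_of_unc Hunc.
have [k0 _] := inh_of_inf Kinf.
have s := HK.1.
move/card_eqPle: (MK) => [MsK sKM].
move/card_eqPle: (CcE) => [CcsK sKCc].
have Minf : ~ finite_set [set: M].
  move=> Mf; apply: Kinf; apply: card_le_finite (single_le K) _.
  exact: card_le_finite sKM Mf.
have MCc : [set: M] #<= Cc := card_le_trans MsK sKCc.
have DM : D #<= [set: M].
  apply: card_le_trans (card_leT D) _; apply: card_le_trans (fun_le HK Hunc Hpow) _.
  exact: sKM.
have KD := K_le_D HK Hunc Hpow HM.1 DM Hdom.
have KM : [set: K] #<= [set: M] := card_le_trans (single_le K) sKM.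
pose CA A := epsilon (inhabits setT) (fun C => Cc A -> club lt C /\ C `<=` A).
have CAP A : Cc A -> club lt (CA A) /\ CA A `<=` A.
  move=> CcA; have [C [cC CA']] := CcF A CcA.
  have ex : exists C, Cc A -> club lt C /\ C `<=` A by exists C.
  exact: epsilon_spec (inhabits setT) _ ex CcA.
pose fA A x := epsilon (inhabits k0) (fun y => lt x y /\ CA A y).
have fAP A : Cc A -> forall x, lt x (fA A x) /\ CA A (fA A x).
  move=> CcA x; have [[_ unb] _] := CAP A CcA.
  exact: epsilon_spec (inhabits k0) _ (unb x).
pose gA A := epsilon (inhabits (fun x : K => x)) (fun g => Cc A -> D g /\ le_star lt (fA A) g).
have gAP A : Cc A -> D (gA A) /\ le_star lt (fA A) (gA A).
  move=> CcA; have [g Dg hg] := Hdom (fA A).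
  have ex : exists g, Cc A -> D g /\ le_star lt (fA A) g by exists g.
  exact: epsilon_spec (inhabits (fun x : K => x)) _ ex CcA.
pose bA A := epsilon (inhabits k0) (fun b => Cc A -> forall a, lt (gA A a) (fA A a) -> lt a b).
have bAP A : Cc A -> forall a, lt (gA A a) (fA A a) -> lt a (bA A).
  move=> CcA; have [_ hle] := gAP A CcA.
  have [b Hb] := reg HK Hunc Hpow _ hle.
  have ex : exists b, Cc A -> forall a, lt (gA A a) (fA A a) -> lt a b by exists b.
  exact: epsilon_spec (inhabits k0) _ ex CcA.
have [g [Dg MF1]] := @PH M ltM _ Cc _ D gA HM Minf MCc DM Hcof (fun A CcA => (gAP A CcA).1).
have Hcof2 : forall X : set M, cofinal ltM X -> ~ (X #<= [set: K]).
  by move=> X hc h; exact: Hcof X hc (card_le_trans h KD).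
have [b [_ MF2]] := @PH M ltM _ [set t | Cc t /\ gA t = g] _ [set: K] bA HM Minf MF1 KM Hcof2 (fun _ _ => I).
exists [set t | (Cc t /\ gA t = g) /\ bA t = b]; split.
- by move=> t [[]].
- apply/card_eqPle; split; last exact: card_le_trans sKM MF2.
  apply: card_le_trans CcsK; apply: subset_card_le => t [[]] //.
- exists (Zc lt g b); split; first by split; [exact: Zc_closed|exact: Zc_unb].
  move=> x Zx A [[CcA eg] eb].
  have [cl sub] := CAP A CcA.
  apply: sub; apply: (@Zc_sub K lt (CA A) (fA A) (gA A) (bA A) HK cl (fAP A CcA)) => [y ny hy|]; first by apply: ny; exact: bAP.
  by rewrite eg eb.
Qed.
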